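(* Let $\mathcal{H}=(Q_0,Q_1,\beta)$ be a directed tensor-labeled hypergraph over $\mathbb{R}$. With the conventions $\delta_{\le-1}(\mathcal{H}):=|V_{\mathrm{macro}}|-c_{\mathrm{macro}}$ and $L_{\le-1}:=0$, for every $k\ge0$, $$\mathrm{rank}(L_{\le k})-\mathrm{rank}(L_{\le k-1})=\delta_{\le k-1}(\mathcal{H})-\delta_{\le k}(\mathcal{H}).$$
   Context: $T(\mathbb{R}^{Q_0})=\bigoplus_{k\ge0}(\mathbb{R}^{Q_0})^{\otimes k}$ with the inner product making the standard tensor basis orthonormal; $\pi_{\le k}$ is the orthogonal projection onto degrees $\le k$. A directed tensor-labeled hypergraph is $\mathcal{H}=(Q_0,Q_1,\beta)$ ($Q_0,Q_1$ finite) with $\beta:\mathbb{R}^{Q_1}\to T\times T$ linear, $\beta(\mathbf{1}_e)=(A_e,B_e)$; $\partial_\beta:\mathbf{1}_e\mapsto B_e-A_e$; $L_{\le k}:=(\pi_{\le k}\partial_\beta)^*(\pi_{\le k}\partial_\beta)$ (adjoint with respect to the standard inner products). $V_{\mathrm{macro}}=\{A_e\}\cup\{B_e\}$; macrograph on $V_{\mathrm{macro}}$ with edges $Q_1$, $e:A_e\to B_e$, $c_{\mathrm{macro}}$ its number of weakly connected components; $B_{\mathrm{macro}}:\mathbf{1}_e\mapsto\mathbf{1}_{B_e}-\mathbf{1}_{A_e}$; $\hat\phi:\mathbf{1}_w\mapsto w$; $\delta_{\le k}(\mathcal{H})=\dim(\mathrm{Im}B_{\mathrm{macro}}\cap\mathrm{Ker}(\pi_{\le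 k}\circ\hat\phi))$ for $k\ge0$. *)

(* Defs.v *)
From HB Require Import structures.
From mathcomp Require Import all_boot all_order all_algebra.
From mathcomp Require Import finmap.
From mathcomp Require Import reals.
Set Implicit Arguments. Unset Strict Implicit. Unset Printing Implicit Defensive.
Import Order.TTheory GRing.Theory Num.Theory.
Local Open Scope ring_scope.
Local Open Scope fset_scope.

(* The tensor algebra T(R^{Q0}) = (+)_k (R^{Q0})^{(x)k}: an element is a
   finitely supported function on words over Q0 (the standard basis of
   (R^{Q0})^{(x)k} is indexed by the words of length k). *)
Notation tensor Q0 R := {fsfun seq Q0 -> R with 0%R}.

Section Hypergraph.
Variables (R : realType) (Q0 Q1 : finType).
(* beta(1_e) = (A e, B e) *)
Variables (A B : Q1 -> tensor Q0 R).

Definition hg_words : seq (seq Q0) :=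
  enum_fset (\big[fsetU/fset0]_(e : Q1) (finsupp (A e) `|` finsupp (B e))).

Definition hg_bd (e : Q1) (w : seq Q0) : R := B e w - A e w.

(* <pi_{<=k} x, pi_{<=k} y> for x, y supported in hg_words (the standard
   inner product; words outside hg_words contribute 0). *)
Definition hg_ip (k : nat) (x y : seq Q0 -> R) : R :=
  \sum_(w <- hg_words | (size w <= k)%N) x w * y w.

(* L_{<=k} = (pi_{<=k} d)^* (pi_{<=k} d), as a matrix on R^{Q1}
   (Q1 indexed through enum_val): entries <pi d 1_e, pi d 1_f>. *)
Definition hg_L (k : nat) : 'M[R]_#|Q1| :=
  \matrix_(i, j) hg_ip k (hg_bd (enum_val i)) (hg_bd (enum_val j)).

(* rank L_{<=k-1}, with L_{<=-1} := 0; argument k stands for index k-1 *)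
Definition hg_rankL_prev (k : nat) : nat :=
  if k is k'.+1 then \rank (hg_L k') else 0%N.

(* V_macro = {A_e} u {B_e} (as a set of tensors), enumerated without repetition *)
Definition hg_V : seq (tensor Q0 R) :=
  undup ([seq A e | e <- enum Q1] ++ [seq B e | e <- enum Q1]).

Definition hg_nV : nat := size hg_V.

Definition hg_idx (t : tensor Q0 R) : nat := index t hg_V.

(* B_macro : R^{Q1} -> R^{V_macro}, 1_e |-> 1_{B_e} - 1_{A_e}, as a matrix
   acting on row vectors (so its image is its row space). *)
Definition hg_Bmacro : 'M[R]_(#|Q1|, hg_nV) :=
  \matrix_(i, j) ((((j : nat) == hg_idx (B (enum_val i))) : nat)%:R
                  - (((j : nat) == hg_idx (A (enum_val i))) : nat)%:R).

(* pi_{<=k} o phi_hat : R^{V_macro} -> T, 1_w |-> pi_{<=k} w, in coordinates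
   on the words (only words of hg_words can be nonzero). *)
Definition hg_Phi (k : nat) : 'M[R]_(hg_nV, size hg_words) :=
  \matrix_(i, j) (let w := nth [::] hg_words j in
                  if (size w <= k)%N then (nth [fsfun] hg_V i) w else 0).

Definition hg_delta (k : nat) : nat :=
  \rank (hg_Bmacro :&: kermx (hg_Phi k))%MS.

(* macrograph: edge e : A_e -> B_e; weak connectivity = connectivity of the
   symmetrized adjacency relation *)
Definition hg_macro_rel : rel 'I_hg_nV :=
  fun i j => [exists e : Q1,
     ((hg_idx (A e) == i :> nat) && (hg_idx (B e) == j :> nat))
  || ((hg_idx (B e) == i :> nat) && (hg_idx (A e) == j :> nat))].

Definition hg_cmacro : nat := n_comp hg_macro_rel 'I_hg_nV.

(* delta_{<=k-1}, with delta_{<=-1} := |V_macro| - c_macro *)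
Definition hg_delta_prev (k : nat) : nat :=
  if k is k'.+1 then hg_delta k' else (hg_nV - hg_cmacro)%N.

End Hypergraph.

(* Main.v *)
Require Import Defs.
From HB Require Import structures.
From mathcomp Require Import all_boot all_order all_algebra.
From mathcomp Require Import finmap.
From mathcomp Require Import reals.
Import Order.TTheory GRing.Theory Num.Theory.
Local Open Scope ring_scope.

Lemma sumsq0 (R : realFieldType) m n (N : 'M[R]_(m, n)) : N *m N^T = 0 -> N = 0.
Proof.
move=> H; apply/matrixP => i j.
have := congr1 (fun X : 'M[R]_m => X i i) H; rewrite !mxE => H2.
have pos : forall l : 'I_n, true -> 0 <= N i l * N^T l i.
  by move=> l _; rewrite mxE -expr2 sqr_ge0.
have := psumr_eq0P pos H2 (i:=j) isT.
by rewrite !mxE => /eqP; rewrite mulf_eq0 orbb => /eqP ->.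
Qed.

Lemma rank_MMt (R : realFieldType) m n (M : 'M[R]_(m, n)) : \rank (M *m M^T) = \rank M.
Proof.
have := mxrank_mul_ker M M^T.
set K := (M :&: kermx M^T)%MS.
have [Y KY] : exists Y, K = Y *m M.
  by apply/submxP; exact: capmxSl.
have KM : K *m M^T = 0 by apply/sub_kermxP; exact: capmxSr.
have K0 : K = 0.
  apply: sumsq0.
  by rewrite {2}KY trmx_mul mulmxA KM mul0mx.
by rewrite K0 mxrank0 addn0.
Qed.

Lemma sum_ind (R : pzRingType) n (m : nat) (h : (m < n)%N) (F : 'I_n -> R) :
  \sum_(v : 'I_n) (((v : nat) == m) : nat)%:R * F v = F (Ordinal h).
Proof.
rewrite (bigD1 (Ordinal h)) //= eqxx mul1r big1 ?addr0 // => v hv.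
have -> : ((v : nat) == m) = false.
  apply/negbTE; apply: contra hv => /eqP e; apply/eqP; exact: val_inj.
by rewrite mul0r.
Qed.

Lemma sum_ind' (R : pzRingType) n (a : 'I_n) (F : 'I_n -> R) :
  \sum_(v : 'I_n) (((v : nat) == (a : nat)) : nat)%:R * F v = F a.
Proof.
rewrite (bigD1 a) //= eqxx mul1r big1 ?addr0 // => v hv.
by rewrite (inj_eq val_inj) (negbTE hv) mul0r.
Qed.

Lemma sum_indr' (R : pzRingType) n (a : 'I_n) (F : 'I_n -> R) :
  \sum_(v : 'I_n) F v * (((v : nat) == (a : nat)) : nat)%:R = F a.
Proof.
rewrite (bigD1 a) //= eqxx mulr1 big1 ?addr0 // => v hv.
by rewrite (inj_eq val_inj) (negbTE hv) mulr0.
Qed.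

Lemma sum_indr (R : pzRingType) n (m : nat) (h : (m < n)%N) (F : 'I_n -> R) :
  \sum_(v : 'I_n) F v * (((v : nat) == m) : nat)%:R = F (Ordinal h).
Proof.
rewrite (bigD1 (Ordinal h)) //= eqxx mulr1 big1 ?addr0 // => v hv.
have -> : ((v : nat) == m) = false.
  apply/negbTE; apply: contra hv => /eqP e; apply/eqP; exact: val_inj.
by rewrite mulr0.
Qed.
Lemma mul_diffL (R : pzRingType) m n p (M : 'M[R]_(m, n)) (Ph : 'M[R]_(n, p)) i j (a b : 'I_n) :
  (forall v : 'I_n, M i v = (((v : nat) == (b : nat)) : nat)%:R - (((v : nat) == (a : nat)) : nat)%:R) ->
  (M *m Ph) i j = Ph b j - Ph a j.
Proof.
move=> HM; rewrite mxE.
under eq_bigr => v _ do rewrite HM mulrBl.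
by rewrite sumrB !sum_ind'.
Qed.

Lemma mul_diffR (R : pzRingType) m n p (K : 'M[R]_(p, n)) (M : 'M[R]_(n, m)) i f (a b : 'I_n) :
  (forall v : 'I_n, M v f = (((v : nat) == (b : nat)) : nat)%:R - (((v : nat) == (a : nat)) : nat)%:R) ->
  (K *m M) i f = K i b - K i a.
Proof.
move=> HM; rewrite mxE.
under eq_bigr => v _ do rewrite HM mulrBr.
by rewrite sumrB !sum_indr'.
Qed.

Section HG.
Variables (R : realType) (Q0 Q1 : finType).
Variables (A B : Q1 -> {fsfun seq Q0 -> R with 0%R}).

Local Notation nV := (hg_nV A B).
Local Notation V := (hg_V A B).
Local Notation Bm := (hg_Bmacro A B).

Lemma memA e : A e \in V.
Proof. by rewrite /hg_V mem_undup mem_cat map_f ?mem_enum. Qed.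
Lemma memB e : B e \in V.
Proof. by rewrite /hg_V mem_undup mem_cat orbC map_f ?mem_enum. Qed.
Lemma ltA e : (hg_idx A B (A e) < nV)%N.
Proof. by rewrite /hg_idx /hg_nV index_mem memA. Qed.
Lemma ltB e : (hg_idx A B (B e) < nV)%N.
Proof. by rewrite /hg_idx /hg_nV index_mem memB. Qed.
Definition ia e : 'I_nV := Ordinal (ltA e).
Definition ib e : 'I_nV := Ordinal (ltB e).
Lemma val_ia e : (ia e : nat) = hg_idx A B (A e). Proof. by []. Qed.
Lemma val_ib e : (ib e : nat) = hg_idx A B (B e). Proof. by []. Qed.
Lemma nthA e : nth [fsfun] V (ia e) = A e.
Proof. by rewrite /= nth_index ?memA. Qed.
Lemma nthB e : nth [fsfun] V (ib e) = B e.
Proof. by rewrite /= nth_index ?memB. Qed.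

Lemma BmPhiE k i j : (Bm *m hg_Phi A B k) i j =
  let w := nth [::] (hg_words A B) j in
  if (size w <= k)%N then hg_bd A B (enum_val i) w else 0.
Proof.
rewrite (@mul_diffL _ _ _ _ _ _ i j (ia (enum_val i)) (ib (enum_val i))); last first.
  by move=> v; rewrite mxE -val_ia -val_ib.
rewrite !mxE /= nthA nthB /hg_bd.
by case: ifP => _ //; rewrite subrr.
Qed.

Lemma L_eq k : hg_L A B k = (Bm *m hg_Phi A B k) *m (Bm *m hg_Phi A B k)^T.
Proof.
apply/matrixP => i j; rewrite [LHS]mxE [RHS]mxE /hg_ip (big_nth [::]) big_mkord big_mkcond.
apply: eq_bigr => l _; rewrite [(_^T) _ _]mxE !BmPhiE /=.
by case: ifP => _; rewrite ?mulr0.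
Qed.

Lemma rankL k : (\rank (hg_L A B k) + hg_delta A B k)%N = \rank Bm.
Proof. by rewrite L_eq rank_MMt /hg_delta mxrank_mul_ker. Qed.


Local Notation e := (@hg_macro_rel R Q0 Q1 A B).

Lemma e_sym : symmetric e.
Proof. move=> i j; rewrite /hg_macro_rel /=; apply: eq_existsb => f; apply/idP/idP => /orP [] /andP [-> ->]; by rewrite ?orbT. Qed.

Lemma e_edge f : e (ia f) (ib f).
Proof. by apply/existsP; exists f; rewrite -val_ia -val_ib !eqxx. Qed.

Lemma root_edge f : fingraph.root e (ia f) = fingraph.root e (ib f).
Proof.
have gen : forall u v, e u v -> fingraph.root e u = fingraph.root e v.
  move=> u v /connect1 huv.
  exact: (elimTF (fingraph.rootP (sym_connect_sym e_sym)) huv).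
exact: gen (e_edge f).
Qed.

Lemma BmT_entry v f : Bm^T v (enum_rank f) =
  (((v : nat) == ib f) : nat)%:R - (((v : nat) == ia f) : nat)%:R.
Proof. by rewrite mxE [LHS]mxE enum_rankK -val_ia -val_ib. Qed.

Lemma ker_const p (K : 'M[R]_(p, nV)) : K *m Bm^T = 0 ->
  forall i u v, connect e u v -> K i u = K i v.
Proof.
move=> KB i.
have Hf f : K i (ia f) = K i (ib f).
  move/matrixP: KB => /(_ i (enum_rank f)).
  rewrite (@mul_diffR _ _ _ _ _ _ i (enum_rank f) (ia f) (ib f)); last by move=> v; rewrite BmT_entry.
  rewrite [RHS]mxE => /eqP; rewrite subr_eq0 => /eqP ->. done.
move=> u v /connectP [pth]; elim: pth u => [|w pth IH] u /=.
  by move=> _ ->.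
move=> /andP [euw pw] hv; rewrite -(IH w pw hv).
case/existsP: euw => f /orP [] /andP [/eqP h1 /eqP h2].
  have -> : u = ia f by apply: val_inj => /=; rewrite ?val_ia h1.
  have -> : w = ib f by apply: val_inj => /=; rewrite ?val_ib h2.
  exact: Hf.
have -> : u = ib f by apply: val_inj => /=; rewrite ?val_ib h1.
have -> : w = ia f by apply: val_inj => /=; rewrite ?val_ia h2.
by rewrite Hf.
Qed.




Definition S := [set v : 'I_nV | fingraph.roots e v].
Definition C : 'M[R]_(#|S|, nV) :=
  \matrix_(r, v) ((fingraph.root e v == enum_val r) : nat)%:R.
Definition P : 'M[R]_(nV, #|S|) := \matrix_(v, r) ((v == enum_val r) : nat)%:R.

Lemma rootS (r : 'I_#|S|) : fingraph.root e (enum_val r) = enum_val r :> 'I_nV.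
Proof. by have := enum_valP r; rewrite inE => /eqP. Qed.

Lemma CP : C *m P = 1%:M.
Proof.
apply/matrixP => r r'; rewrite !mxE.
rewrite (bigD1 (enum_val r')) //= !mxE eqxx mulr1 big1 ?addr0; last first.
  by move=> v /negbTE hv; rewrite !mxE hv mulr0.
by rewrite rootS (inj_eq enum_val_inj) eq_sym.
Qed.

Lemma rankC : \rank C = #|S|.
Proof.
apply/eqP; rewrite eqn_leq rank_leq_row /=.
by rewrite -{1}(mxrank1 R #|S|) -CP; exact: mxrankM_maxl.
Qed.

Lemma CB : C *m Bm^T = 0.
Proof.
apply/matrixP => r f'; rewrite -(enum_valK f'); set f := enum_val f'.
rewrite (@mul_diffR _ _ _ _ _ _ r (enum_rank f) (ia f) (ib f)); last by move=> v; rewrite BmT_entry.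
by rewrite !mxE root_edge subrr.
Qed.

Lemma K_sub : (kermx Bm^T <= C)%MS.
Proof.
set K := kermx Bm^T.
have KB : K *m Bm^T = 0 := mulmx_ker Bm^T.
clearbody K.
set Y := \matrix_(i, r) K i (enum_val r) : 'M[R]_(nV, #|S|).
suff -> : K = Y *m C by exact: submxMl.
apply/matrixP => i v; rewrite [RHS]mxE.
have vS : fingraph.root e v \in S by rewrite inE; exact: (fingraph.roots_root (sym_connect_sym e_sym)).
rewrite (bigD1 (enum_rank_in vS (fingraph.root e v))) //= !mxE enum_rankK_in // eqxx mulr1.
rewrite big1 ?addr0; last first.
  move=> r hr; rewrite !mxE.
  case: eqP => [h|_]; last by rewrite mulr0.
  have E : enum_rank_in vS (fingraph.root e v) = r.
    by apply: enum_val_inj; rewrite enum_rankK_in.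
  by rewrite E eqxx in hr.

exact: (ker_const _ _ KB i _ _ (fingraph.connect_root e v)).
Qed.

Lemma rank_ker : \rank (kermx Bm^T) = #|S|.
Proof.
rewrite -rankC; apply: eqmx_rank; apply/andP; split; first exact: K_sub.
by apply/sub_kermxP; exact: CB.
Qed.

Lemma rankBm : (\rank Bm + hg_cmacro A B)%N = nV.
Proof.
have -> : hg_cmacro A B = #|S|.
  by rewrite /hg_cmacro /S; apply: eq_card => v; rewrite !inE andbT.
have := rank_ker; rewrite mxrank_ker mxrank_tr => <-.
by rewrite subnKC // rank_leq_col.
Qed.

End HG.

Theorem corollary6p11 (R : realType) (Q0 Q1 : finType)
    (A B : Q1 -> {fsfun seq Q0 -> R with 0%R}) (k : nat) :
  ((\rank (hg_L A B k))%:Z - (hg_rankL_prev A B k)%:Z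
   = (hg_delta_prev A B k)%:Z - (hg_delta A B k)%:Z)%R.
Proof.
have H2 := rankBm R Q0 Q1 A B.
case: k => [|k] /=.
  have H1 := rankL R Q0 Q1 A B 0.
  have -> : (hg_nV A B - hg_cmacro A B)%N = \rank (hg_Bmacro A B) by rewrite -[in LHS]H2 addnK.
  by rewrite -H1 PoszD subr0 addrK.
have H1 := rankL R Q0 Q1 A B k.+1.
have H0 := rankL R Q0 Q1 A B k.
have E : ((\rank (hg_L A B k.+1))%:Z + (hg_delta A B k.+1)%:Z = (\rank (hg_L A B k))%:Z + (hg_delta A B k)%:Z)%R.
  by rewrite -!PoszD H1 H0.
move: E; set a := Posz _; set b := Posz _; set c := Posz _; set d := Posz _.
move=> E; apply/eqP; rewrite subr_eq.
by rewrite -[a](addrK b) E [d - b + c]addrC addrA.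
Qed.
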